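(* Let $D=\{(x^i,y^i)\}_{i=1}^n$ be any training sequence and $JJ=\{JJ_{x^i}\}$ substructure sets, and let $R$ be the radius of $D$ and $R^{JJ}$ the mixed assignment radius with respect to $JJ$. Consider the first pass of SWVP over $D$ (in the given order), assuming that at every update the weights returned by $\textsc{SetGamma}$ satisfy the $\gamma$ selection conditions (1) and (2). Then the number of mistakes (updates) made in this first pass satisfies $$\#\text{mistakes-SWVP}\le\min_{\mathbf{u}:\|\mathbf{u}\|=1,\ \delta>0}\frac{(R^{JJ}+D_{\mathbf{u},\delta})^2}{(\delta+r^{diff})^2},$$ where $r^{diff}=r^{diff}(\mathbf{u})\ge 0$. Moreover, for every $\mathbf{u},\delta$ this quantity is at most $\frac{(R+D_{\mathbf{u},\delta})^2}{\delta^2}$.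
   Context: Structured prediction setting: for each input $x$ the output space is $\mathcal{Y}(x)=D_Y^{L_x}$ for a finite domain $D_Y$, with feature map $\phi(x,y')\in\mathbb{R}^d$; $\Delta\phi(x,y,z)=\phi(x,y)-\phi(x,z)$; $[n]=\{1,\dots,n\}$. Mixed assignment: for $y^*,y\in\mathcal{Y}(x)$ and $J\subseteq[L_x]$, $m^J(y^*,y)$ has $k$-th coordinate $y^*_k$ if $k\in J$ and $y_k$ otherwise. Substructure sets $JJ_{x^i}\subseteq 2^{[L_{x^i}]}$ are fixed. SWVP algorithm: initialize $\mathbf{w}=0$; cycle through $(x,y)\in D$; compute $y^*=\arg\max_{y'\in\mathcal{Y}(x)}\mathbf{w}\cdot\phi(x,y')$; if $y^*\neq y$ (a mistake), with $m^J=m^J(y^*,y)$ and $I=\{J\in JJ_x: m^J\ne y\}$, obtain weights $\gamma(m^J)$, $J\in I$, from $\textsc{SetGamma}$ and set $\mathbf{w}\leftarrow\mathbf{w}+\sum_{J\in I}\gamma(m^J)\Delta\phi(x,y,m^J)$. $\gamma$ selection conditions (current $\mathbf{w}$): (1) $\gamma(m^J)\ge0$, $\sum_{J\in I}\gamma(m^J)=1$; (2) $\mathbf{w}\cdot\sum_{J\in I}\gamma(m^J)\Delta\phi(x,y,m^J)\le0$. Radius $R$: minimal constant with $\|\Delta\phi(x^i,y^i,z)\|\le R$ for all $i$, $z\in\mathcal{Y}(x^i)$. Mixed assignment radius $R^{JJ}$: minimal constant with $\|\Delta\phi(x^i,y^i,m^J(z,y^i))\|\le R^{JJ}$ for all $i$,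 $z\in\mathcal{Y}(x^i)$, $J\in JJ_{x^i}$. For a unit vector $\mathbf{u}$ and $\delta>0$: $r^i=\mathbf{u}\cdot\phi(x^i,y^i)-\max_{z\in\mathcal{Y}(x^i),z\ne y^i}\mathbf{u}\cdot\phi(x^i,z)$; $\epsilon_i=\max\{0,\delta-r^i\}$; $D_{\mathbf{u},\delta}=\sqrt{\sum_{i=1}^n\epsilon_i^2}$; ${r^i}^{JJ}=\mathbf{u}\cdot\phi(x^i,y^i)-\max_{z\in\mathcal{Y}(x^i),J\in JJ_{x^i},\,m^J(z,y^i)\ne y^i}\mathbf{u}\cdot\phi(x^i,m^J(z,y^i))$; and $r^{diff}=\min_i\{{r^i}^{JJ}-r^i\}$. *)

(* Defs.v *)
(* real quantities live in an arbitrary real closed field R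
   (needed for Num.sqrt in the Euclidean norm). *)
From HB Require Import structures.
From mathcomp Require Import all_boot all_order all_algebra.
Set Implicit Arguments. Unset Strict Implicit. Unset Printing Implicit Defensive.
Import Order.TTheory GRing.Theory Num.Theory.
Local Open Scope ring_scope.

Section SWVP.
Context {R : rcfType} {d : nat}.

Definition dotv (u v : 'rV[R]_d) : R := \sum_(k < d) u 0 k * v 0 k.
Definition normv (v : 'rV[R]_d) : R := Num.sqrt (dotv v v).

(* Maximum / minimum of a NONEMPTY finite list of reals (the default
   [head 0 s] is itself an element of s, so it does not affect the value
   when s is nonempty). *)
Definition maxne (s : seq R) : R := \big[Num.max/head 0 s]_(a <- s) a.
Definition minne (s : seq R) : R := \big[Num.min/head 0 s]_(a <- s) a.

Context {DY : finType} {X : Type} {L : X -> nat}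
        (phi : forall x : X, {ffun 'I_(L x) -> DY} -> 'rV[R]_d).

Definition dphi (x : X) (y z : {ffun 'I_(L x) -> DY}) : 'rV[R]_d :=
  phi y - phi z.

End SWVP.

Definition mixed {DY : finType} {l : nat} (J : {set 'I_l})
  (ys y : {ffun 'I_l -> DY}) : {ffun 'I_l -> DY} :=
  [ffun k => if k \in J then ys k else y k].

Section Quantities.
Context {R : rcfType} {d : nat} {DY : finType} {X : Type} {L : X -> nat}
        (phi : forall x : X, {ffun 'I_(L x) -> DY} -> 'rV[R]_d)
        (JJ : forall x : X, {set {set 'I_(L x)}}).

Definition Iset (x : X) (ystar y : {ffun 'I_(L x) -> DY}) : {set {set 'I_(L x)}} :=
  [set J in JJ x | mixed J ystar y != y].

Definition swvp_upd (x : X) (ystar y : {ffun 'I_(L x) -> DY})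
  (gamma : {set 'I_(L x)} -> R) : 'rV[R]_d :=
  \sum_(J in Iset ystar y) gamma J *: dphi phi y (mixed J ystar y).

Context (n : nat) (xs : 'I_n -> X)
        (ys : forall i : 'I_n, {ffun 'I_(L (xs i)) -> DY}).

(* A first pass of SWVP over D = ((xs i, ys i))_{i<n}, in order.
   w k is the weight vector before processing example k (w 0 = 0),
   ystar i is the (any) argmax prediction on example i, and gamma i are the
   weights returned by SetGamma on example i; they are required to satisfy
   the gamma selection conditions (1) and (2) w.r.t. the current weights. *)
Definition swvp_first_pass (w : nat -> 'rV[R]_d)
  (ystar : forall i : 'I_n, {ffun 'I_(L (xs i)) -> DY})
  (gamma : forall i : 'I_n, {set 'I_(L (xs i))} -> R) : Prop :=
  w 0%N = 0 /\
  forall i : 'I_n,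
    (forall y' : {ffun 'I_(L (xs i)) -> DY},
        dotv (w i) (phi y') <= dotv (w i) (phi (ystar i))) /\
    (if ystar i != ys i then
       [/\ forall J, J \in Iset (ystar i) (ys i) -> 0 <= gamma i J,
           \sum_(J in Iset (ystar i) (ys i)) gamma i J = 1,
           dotv (w i) (swvp_upd (ystar i) (ys i) (gamma i)) <= 0 &
           w i.+1 = w i + swvp_upd (ystar i) (ys i) (gamma i)]
     else w i.+1 = w i).

Definition num_mistakes (ystar : forall i : 'I_n, {ffun 'I_(L (xs i)) -> DY}) : nat :=
  #|[set i : 'I_n | ystar i != ys i]|.

(* Radius R and mixed assignment radius R^JJ (minimal nonnegative constants,
   i.e. maxima of the finite sets of norms). *)
Definition radius : R :=
  \big[Num.max/0]_(i < n) \big[Num.max/0]_(z : {ffun 'I_(L (xs i)) -> DY})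
     normv (dphi phi (ys i) z).

Definition radiusJJ : R :=
  \big[Num.max/0]_(i < n) \big[Num.max/0]_(z : {ffun 'I_(L (xs i)) -> DY})
    \big[Num.max/0]_(J in JJ (xs i))
     normv (dphi phi (ys i) (mixed J z (ys i))).

Definition r_marg (u : 'rV[R]_d) (i : 'I_n) : R :=
  dotv u (phi (ys i)) -
  maxne [seq dotv u (phi z) | z <- enum (predC1 (ys i))].

Definition r_margJJ (u : 'rV[R]_d) (i : 'I_n) : R :=
  dotv u (phi (ys i)) -
  maxne [seq dotv u (phi (mixed p.2 p.1 (ys i))) |
         p <- enum [pred p : {ffun 'I_(L (xs i)) -> DY} * {set 'I_(L (xs i))} |
                    (p.2 \in JJ (xs i)) && (mixed p.2 p.1 (ys i) != ys i)]].

Definition eps_i (u : 'rV[R]_d) (delta : R) (i : 'I_n) : R :=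
  Num.max 0 (delta - r_marg u i).

Definition D_ud (u : 'rV[R]_d) (delta : R) : R :=
  Num.sqrt (\sum_(i < n) eps_i u delta i ^+ 2).

(* r^diff = min_i (r^i^JJ - r^i)  (convention: 0 if n = 0) *)
Definition r_diff (u : 'rV[R]_d) : R :=
  minne [seq r_margJJ u i - r_marg u i | i <- enum 'I_n].

End Quantities.

(* Main.v *)
Require Import Defs.
From HB Require Import structures.
From mathcomp Require Import all_boot all_order all_algebra.
From mathcomp Require Import ring lra.
Import Order.TTheory GRing.Theory Num.Theory.
Local Open Scope ring_scope.

Lemma bigmax_elem (R : realDomainType) (I : eqType) (r : seq I) (P : pred I)
  (F : I -> R) x0 i : i \in r -> P i -> F i <= \big[Num.max/x0]_(j <- r | P j) F j.
Proof.
elim: r => // a r IH; rewrite inE big_cons => /orP[/eqP -> ->|ir Pi].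
  by rewrite le_max lexx.
case: (P a); last exact: IH.
by rewrite le_max IH // orbT.
Qed.

Lemma bigmax_fin (R : realDomainType) (I : finType) (P : pred I) (F : I -> R) x0 i c :
  P i -> c <= F i -> c <= \big[Num.max/x0]_(j | P j) F j.
Proof. by move=> Pi h; apply: (le_trans h); apply: bigmax_elem => //; exact: mem_index_enum. Qed.

Lemma bigmax_le (R : realDomainType) (I : Type) (r : seq I) (P : pred I)
  (F : I -> R) x0 c : x0 <= c -> (forall i, P i -> F i <= c) ->
  \big[Num.max/x0]_(j <- r | P j) F j <= c.
Proof.
move=> h0 hF; elim/big_ind: _ => //; first by move=> x y hx hy; rewrite ge_max hx hy.
Qed.

Lemma bigmax_ge (R : realDomainType) (I : Type) (r : seq I) (P : pred I)
  (F : I -> R) x0 c : c <= x0 -> (forall i, P i -> c <= F i) ->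
  c <= \big[Num.max/x0]_(j <- r | P j) F j.
Proof.
move=> h0 hF; elim/big_ind: _ => //; by move=> x y hx hy; rewrite le_max hx.
Qed.

Lemma maxne_elem (R : rcfType) (s : seq R) a : a \in s -> a <= maxne s.
Proof. by move=> h; rewrite /maxne; exact: (@bigmax_elem _ _ s xpredT (fun a => a) _ a h). Qed.

Lemma maxne_le (R : rcfType) (s : seq R) c : s != [::] ->
  (forall a, a \in s -> a <= c) -> maxne s <= c.
Proof.
move=> hs h; rewrite /maxne big_seq; apply: bigmax_le => [|i]; last exact: h.
by case: s hs h => //= a s _ h; apply: h; rewrite inE eqxx.
Qed.

Lemma bigmin_elem (R : realDomainType) (I : eqType) (r : seq I) (P : pred I)
  (F : I -> R) x0 i : i \in r -> P i -> \big[Num.min/x0]_(j <- r | P j) F j <= F i.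
Proof.
elim: r => // a r IH; rewrite inE big_cons => /orP[/eqP -> ->|ir Pi].
  by rewrite ge_min lexx.
case: (P a); last exact: IH.
by rewrite ge_min IH // orbT.
Qed.

Lemma minne_elem (R : rcfType) (s : seq R) a : a \in s -> minne s <= a.
Proof. by move=> h; rewrite /minne; exact: (@bigmin_elem _ _ s xpredT (fun a => a) _ a h). Qed.

Lemma minne_ge0 (R : rcfType) (s : seq R) :
  (forall a, a \in s -> 0 <= a) -> 0 <= minne s.
Proof.
move=> h; rewrite /minne big_seq; elim/big_ind: _ => //.
- by case: s h => //= a s h; apply: h; rewrite inE eqxx.
- by move=> x y hx hy; rewrite le_min hx.
Qed.

Section Dot.
Variables (R : rcfType) (d : nat).
Implicit Types (a b c : 'rV[R]_d).

Lemma eq_le' (x y : R) : x = y -> x <= y. Proof. by move->. Qed.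

Lemma dotvC a b : dotv a b = dotv b a.
Proof. by rewrite /dotv; apply: eq_bigr => k _; rewrite mulrC. Qed.

Lemma dotvDl a b c : dotv (a + b) c = dotv a c + dotv b c.
Proof. by rewrite /dotv -big_split; apply: eq_bigr => k _; rewrite !mxE mulrDl. Qed.

Lemma dotvZl t a c : dotv (t *: a) c = t * dotv a c.
Proof. by rewrite /dotv mulr_sumr; apply: eq_bigr => k _; rewrite !mxE mulrA. Qed.

Lemma dotvNl a c : dotv (- a) c = - dotv a c.
Proof. by rewrite -scaleN1r dotvZl mulN1r. Qed.

Lemma dotvBl a b c : dotv (a - b) c = dotv a c - dotv b c.
Proof. by rewrite dotvDl dotvNl. Qed.

Lemma dotvDr a b c : dotv c (a + b) = dotv c a + dotv c b.
Proof. by rewrite dotvC dotvDl !(dotvC c). Qed.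

Lemma dotvZr t a c : dotv c (t *: a) = t * dotv c a.
Proof. by rewrite dotvC dotvZl dotvC. Qed.

Lemma dotv_suml (I : Type) (r : seq I) (P : pred I) (F : I -> 'rV[R]_d) c :
  dotv (\sum_(i <- r | P i) F i) c = \sum_(i <- r | P i) dotv (F i) c.
Proof.
elim/big_rec2: _ => [|i y1 y2 _ <-].
  by rewrite /dotv big1 // => k _; rewrite mxE mul0r.
by rewrite dotvDl.
Qed.

Lemma dotv_ge0 a : 0 <= dotv a a.
Proof. by rewrite /dotv; apply: sumr_ge0 => k _; rewrite -expr2 sqr_ge0. Qed.

Lemma normv_ge0 a : 0 <= normv a.
Proof. exact: sqrtr_ge0. Qed.

Lemma dotv_CS2 a b : dotv a b ^+ 2 <= dotv a a * dotv b b.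
Proof.
set A := dotv a a; set B := dotv b b; set C := dotv a b.
have q : forall x y : R, 0 <= x ^+ 2 * A + 2 * x * y * C + y ^+ 2 * B.
  move=> x y; have := dotv_ge0 (x *: a + y *: b).
  rewrite !dotvDl !dotvDr !dotvZl !dotvZr (dotvC b a) -/A -/B -/C.
  by move=> h; apply: (le_trans h); apply: eq_le'; ring.
have hA : 0 <= A := dotv_ge0 a. have hB : 0 <= B := dotv_ge0 b.
have h1 := q B (- C). have h2 := q C (- (A + 1)).
have [Bp|] := ltrP 0 B.
  have : 0 <= B * (A * B - C ^+ 2) by apply: (le_trans h1); apply: eq_le'; ring.
  by rewrite pmulr_rge0 // subr_ge0 mulrC expr2.
move=> B0; have B0' : B = 0 by apply/eqP; rewrite eq_le B0 hB.
rewrite B0' mulr0; move: h2; rewrite B0'.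
nra.
Qed.

Lemma dotv_CS a b : dotv a b <= normv a * normv b.
Proof.
have [h|h] := lerP (dotv a b) 0.
  by apply: (le_trans h); rewrite mulr_ge0 // normv_ge0.
rewrite /normv -sqrtrM ?dotv_ge0 //.
rewrite -(ger0_norm (ltW h)) -sqrtr_sqr ler_sqrt ?mulr_ge0 ?dotv_ge0 //.
exact: dotv_CS2.
Qed.

End Dot.

Lemma dotv0r (R : rcfType) (d : nat) (a : 'rV[R]_d) : dotv a 0 = 0.
Proof. by rewrite /dotv big1 // => k _; rewrite mxE mulr0. Qed.

Lemma sum_step (R : rcfType) n k (Hk : (k < n)%N) (P : pred 'I_n) (F : 'I_n -> R) :
  \sum_(i < n | (i < k.+1)%N && P i) F i =
  \sum_(i < n | (i < k)%N && P i) F i + (if P (Ordinal Hk) then F (Ordinal Hk) else 0).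
Proof.
case: ifP => HP.
  rewrite (bigD1 (Ordinal Hk)) /= ?ltnSn ?HP // addrC; congr (_ + _).
  apply: eq_bigl => i; rewrite ltnS leq_eqVlt.
  have -> : (i != Ordinal Hk) = (nat_of_ord i != k).
    by rewrite -val_eqE.
  case: (nat_of_ord i =P k) => [E|NE] /=; last by rewrite andbT.
  by rewrite E ltnn andbF.
rewrite addr0; apply: eq_bigl => i; rewrite ltnS leq_eqVlt.
case: (nat_of_ord i =P k) => //= E.
have -> : i = Ordinal Hk by apply: val_inj.
by rewrite HP ltnn.
Qed.

Theorem theorem2 (R : rcfType) (d : nat) (DY : finType) (X : Type)
  (L : X -> nat) (phi : forall x : X, {ffun 'I_(L x) -> DY} -> 'rV[R]_d)
  (JJ : forall x : X, {set {set 'I_(L x)}})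
  (n : nat) (xs : 'I_n -> X) (ys : forall i : 'I_n, {ffun 'I_(L (xs i)) -> DY})
  (* the maxima defining r^i and r^i^JJ range over nonempty sets *)
  (Hne : forall i : 'I_n, exists (z : {ffun 'I_(L (xs i)) -> DY})
           (J : {set 'I_(L (xs i))}), J \in JJ (xs i) /\ mixed J z (ys i) != ys i)
  (w : nat -> 'rV[R]_d)
  (ystar : forall i : 'I_n, {ffun 'I_(L (xs i)) -> DY})
  (gamma : forall i : 'I_n, {set 'I_(L (xs i))} -> R) :
  swvp_first_pass phi JJ ys w ystar gamma ->
  forall (u : 'rV[R]_d) (delta : R), normv u = 1 -> 0 < delta ->
    [/\ 0 <= r_diff phi JJ ys u,
        (num_mistakes ys ystar)%:R <=
          (radiusJJ phi JJ ys + D_ud phi ys u delta) ^+ 2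
            / (delta + r_diff phi JJ ys u) ^+ 2 &
        (radiusJJ phi JJ ys + D_ud phi ys u delta) ^+ 2
            / (delta + r_diff phi JJ ys u) ^+ 2
          <= (radius phi ys + D_ud phi ys u delta) ^+ 2 / delta ^+ 2].
Proof.
move=> [w0 Hst] u delta hu hd.
set Rjj := radiusJJ phi JJ ys; set Rr := radius phi ys; set D := D_ud phi ys u delta.
set rd := r_diff phi JJ ys u.
have F1 : forall i, r_marg phi ys u i <= r_margJJ phi JJ ys u i.
  move=> i; rewrite /r_marg /r_margJJ lerD2l lerN2.
  apply: maxne_le.
    have [z [J [HJ Hm]]] := Hne i.
    set s := map _ _.
    have hin : dotv u (phi _ (mixed J z (ys i))) \in s.
      by apply/mapP; exists (z, J) => //; rewrite mem_enum; apply/andP.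
    by apply/eqP => E; rewrite E in hin.
  move=> a /mapP [[z J] hp ->]; rewrite mem_enum in hp.
  case/andP: hp => _ hm; apply: maxne_elem; apply/mapP.
  by exists (mixed J z (ys i)) => //; rewrite mem_enum !inE.
have F2 : 0 <= rd.
  rewrite /rd /r_diff; apply: minne_ge0 => a /mapP [i _ ->].
  by rewrite subr_ge0; exact: F1.
have F3 : forall i, rd <= r_margJJ phi JJ ys u i - r_marg phi ys u i.
  move=> i; apply: minne_elem; apply/mapP; exists i => //; exact: mem_enum.
have hRjj0 : 0 <= Rjj.
  apply: bigmax_ge => // i _; apply: bigmax_ge => // z _.
  apply: bigmax_ge => // J _; exact: normv_ge0.
have hRr : Rjj <= Rr.
  have hR0 : 0 <= Rr.
    apply: bigmax_ge => // i _; apply: bigmax_ge => // z _; exact: normv_ge0.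
  apply: bigmax_le => // i _; apply: bigmax_le => // z _.
  apply: bigmax_le => // J _; rewrite /Rr.
  apply: (@bigmax_fin _ _ _ _ _ (i)) => //.
  by apply: (@bigmax_fin _ _ _ _ _ (mixed J z (ys i))).
have hD0 : 0 <= D by apply: sqrtr_ge0.
have F5 : forall i J, J \in Iset JJ (ystar i) (ys i) ->
    normv (dphi phi (ys i) (mixed J (ystar i) (ys i))) <= Rjj.
  move=> i J; rewrite inE => /andP [HJ _]; rewrite /Rjj.
  apply: (@bigmax_fin _ _ _ _ _ (i)) => //.
  apply: (@bigmax_fin _ _ _ _ _ (ystar i)) => //.
  by apply: (@bigmax_fin _ _ _ _ _ (J)).
have F6 : forall i J, J \in Iset JJ (ystar i) (ys i) ->
    r_margJJ phi JJ ys u i <= dotv u (dphi phi (ys i) (mixed J (ystar i) (ys i))).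
  move=> i J; rewrite inE => /andP [HJ Hm].
  rewrite /dphi dotvC dotvBl !(@dotvC _ _ _ u) /r_margJJ lerD2l lerN2.
  apply: maxne_elem; apply/mapP; exists (ystar i, J) => //.
  by rewrite mem_enum; apply/andP.
pose v i := swvp_upd phi JJ (ystar i) (ys i) (gamma i).
have F8 : forall i, (forall J, J \in Iset JJ (ystar i) (ys i) -> 0 <= gamma i J) ->
    \sum_(J in Iset JJ (ystar i) (ys i)) gamma i J = 1 ->
    r_margJJ phi JJ ys u i <= dotv u (v i).
  move=> i g0 g1; rewrite dotvC /v /swvp_upd dotv_suml.
  rewrite -[r_margJJ _ _ _ _ _]mul1r -g1 mulr_suml; apply: ler_sum => J HJ.
  by rewrite dotvZl dotvC; apply: ler_wpM2l; [exact: g0 | exact: F6].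
have F7 : forall i, (forall J, J \in Iset JJ (ystar i) (ys i) -> 0 <= gamma i J) ->
    \sum_(J in Iset JJ (ystar i) (ys i)) gamma i J = 1 ->
    dotv (v i) (v i) <= Rjj ^+ 2.
  move=> i g0 g1.
  have h : dotv (v i) (v i) <= Rjj * normv (v i).
    rewrite {1}/v /swvp_upd dotv_suml.
    rewrite -[Rjj * _]mul1r -g1 mulr_suml; apply: ler_sum => J HJ.
    rewrite dotvZl; apply: ler_wpM2l; first exact: g0.
    apply: (le_trans (dotv_CS _ _ _ _)); apply: ler_wpM2r; first exact: normv_ge0.
    exact: F5.
  have hN : dotv (v i) (v i) = normv (v i) ^+ 2 by rewrite sqr_sqrtr //; exact: dotv_ge0.
  have hN0 := normv_ge0 _ _ (v i).
  rewrite hN in h *; move: hN0 h hRjj0; set N := normv (v i); nra.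
pose mist := fun i : 'I_n => ystar i != ys i.
pose ep := eps_i phi ys u delta.
have Inv : forall k, (k <= n)%N ->
  dotv (w k) (w k) <= (\sum_(i < n | (i < k)%N && mist i) 1) * Rjj ^+ 2 /\
  \sum_(i < n | (i < k)%N && mist i) (delta + rd - ep i) <= dotv u (w k).
  elim=> [_|k IH hk].
    by rewrite !big_pred0 // w0 !dotv0r mul0r.
  have [IH1 IH2] := IH (ltnW hk).
  rewrite !(sum_step _ _ _ hk).
  have [_ hif] := Hst (Ordinal hk).
  rewrite /mist /=; move: hif; case: ifP => Hm /=; last first.
    by move=> ->; rewrite !addr0.
  case=> g0 g1 g2 ->.
  have hv1 := F7 _ g0 g1; have hv2 := F8 _ g0 g1.
  have he : delta - r_marg phi ys u (Ordinal hk) <= ep (Ordinal hk).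
    by rewrite /ep /eps_i le_max lexx orbT.
  have hrd := F3 (Ordinal hk).
  rewrite dotvDl !dotvDr (dotvC _ _ (v _) (w k)); split.
    move: IH1 hv1 g2; rewrite -/(v _) mulrDl mul1r.
    set a := dotv _ _; set b := dotv _ _; set c := dotv _ _; lra.
  move: IH2 hv2 he hrd; rewrite -/(v _).
  set a := \sum_(i < n | _) _; lra.
have [I1 I2] := Inv n (leqnn n).
have ltk : forall (P : pred 'I_n) (F : 'I_n -> R),
    \sum_(i < n | (i < n)%N && P i) F i = \sum_(i < n | P i) F i.
  by move=> P F; apply: eq_bigl => i; rewrite ltn_ord.
rewrite !ltk in I1 I2.
set M := \sum_(i < n | mist i) (1:R) in I1 I2.
have hM0 : 0 <= M by apply: sumr_ge0.
set S := \sum_(i < n | mist i) ep i.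
have hsumc : \sum_(i < n | mist i) (delta + rd) = M * (delta + rd).
  by rewrite /M mulr_suml; apply: eq_bigr => i _; rewrite mul1r.
rewrite sumrB hsumc -/S in I2.
pose a := \row_(i < n) (if mist i then (1:R) else 0).
pose b := \row_(i < n) (if mist i then ep i else 0).
have hab : dotv a b = S.
  rewrite /dotv /S [RHS]big_mkcond; apply: eq_bigr => i _; rewrite !mxE.
  by case: (mist i); [rewrite mul1r | rewrite mul0r].
have haa : dotv a a = M.
  rewrite /dotv /M [RHS]big_mkcond; apply: eq_bigr => i _; rewrite !mxE.
  by case: (mist i); [rewrite mul1r | rewrite mul0r].
have hbb : dotv b b <= \sum_(i < n) ep i ^+ 2.
  rewrite /dotv; apply: ler_sum => i _; rewrite !mxE.
  by case: (mist i); [rewrite expr2 | rewrite mul0r; exact: sqr_ge0].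
have hS : S <= Num.sqrt M * D.
  rewrite -hab; apply: (le_trans (dotv_CS _ _ a b)); rewrite /normv haa.
  apply: ler_wpM2l; first exact: sqrtr_ge0.
  rewrite /D /D_ud ler_sqrt //; apply: sumr_ge0 => i _; exact: sqr_ge0.
have hW : dotv u (w n) <= Num.sqrt M * Rjj.
  apply: (le_trans (dotv_CS _ _ u (w n))); rewrite hu mul1r /normv.
  rewrite -(ger0_norm hRjj0) -sqrtr_sqr -sqrtrM // ler_sqrt ?mulr_ge0 ?sqr_ge0 //.
have hc : 0 < delta + rd by apply: (lt_le_trans hd); rewrite lerDl.
have hnm : (num_mistakes ys ystar)%:R = M.
  rewrite /M (eq_bigl (fun i => i \in [set i | mist i])) ?sumr_const //.
  by move=> i; rewrite inE.
have hMs : M = Num.sqrt M ^+ 2 by rewrite sqr_sqrtr.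
have hs0 : 0 <= Num.sqrt M := sqrtr_ge0 _.
set t := Num.sqrt M in hS hW hMs hs0.
have hineq : M * (delta + rd) <= t * (Rjj + D) by lra.
rewrite {1}hMs in hineq.
have hsc : t * (delta + rd) <= Rjj + D.
  have [s0|sp] := eqVneq t 0.
    by rewrite s0 mul0r addr_ge0.
  have sp' : 0 < t by rewrite lt_def sp hs0.
  rewrite -(ler_pM2l sp') mulrA -expr2; exact: hineq.
split => //.
  rewrite hnm ler_pdivlMr ?exprn_gt0 // hMs.
  have h0 : 0 <= t * (delta + rd) by rewrite mulr_ge0 // ltW.
  move: h0 hsc; set p := t * (delta + rd); move=> h0 hsc.
  have -> : t ^+ 2 * (delta + rd) ^+ 2 = p ^+ 2 by rewrite /p exprMn.
  nra.
rewrite ler_pdivrMr ?exprn_gt0 // mulrAC ler_pdivlMr ?exprn_gt0 //.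
have h1 : (Rjj + D) ^+ 2 <= (Rr + D) ^+ 2 by nra.
have h2 : delta ^+ 2 <= (delta + rd) ^+ 2 by nra.
apply: ler_pM => //; exact: sqr_ge0.
Qed.
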